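(* Let $C>0$ and $f:\mathbb R\to\mathbb R$, $f(x)=\log(1+e^{-x})$. Then for all $a\in[-C,C]$ and all $b\in\mathbb R$, \[f(a)\ge f(b)+f'(b)(a-b)+\frac{e^b}{2(1+C)}f'(b)^2(a-b)^2.\] *)

(* Defs.v *)
From Stdlib Require Import Reals Lra.
From Coquelicot Require Import Coquelicot.
Open Scope R_scope.

Definition floss (x : R) : R := ln (1 + exp (- x)).

(* Main.v *)
Require Import Defs.
From Stdlib Require Import Reals Lra Psatz.
From Coquelicot Require Import Coquelicot.
Open Scope R_scope.

Lemma conv0 (g g1 g2 : R -> R) (a b : R) :
  (forall x, is_derive g x (g1 x)) -> (forall x, is_derive g1 x (g2 x)) ->
  g b = 0 -> g1 b = 0 ->
  (forall x, Rmin a b <= x <= Rmax a b -> 0 <= g2 x) -> 0 <= g a.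
Proof.
  intros Hg Hg1 gb g1b Hpos.
  destruct (Rtotal_order a b) as [Hab|[Hab|Hab]].
  - destruct (MVT_cor2 g g1 a b Hab) as [c [Hc Hc']].
    { intros; apply is_derive_Reals; auto. }
    destruct (MVT_cor2 g1 g2 c b (proj2 Hc')) as [d [Hd Hd']].
    { intros; apply is_derive_Reals; auto. }
    assert (0 <= g2 d).
    { apply Hpos. unfold Rmin, Rmax; destruct (Rle_dec a b); lra. }
    assert (g1 c <= 0) by nra.
    nra.
  - subst; lra.
  - destruct (MVT_cor2 g g1 b a Hab) as [c [Hc Hc']].
    { intros; apply is_derive_Reals; auto. }
    destruct (MVT_cor2 g1 g2 b c (proj1 Hc')) as [d [Hd Hd']].
    { intros; apply is_derive_Reals; auto. }
    assert (0 <= g2 d).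
    { apply Hpos. unfold Rmin, Rmax; destruct (Rle_dec a b); lra. }
    assert (0 <= g1 c) by nra.
    nra.
Qed.

Definition f1 (x : R) : R := - / (1 + exp x).
Definition hh (x : R) : R := exp x / (1 + exp x) ^ 2.

Lemma d_floss x : is_derive floss x (f1 x).
Proof.
  unfold floss, f1. auto_derive.
  - pose proof (exp_pos (-x)); lra.
  - rewrite exp_Ropp. pose proof (exp_pos x).
    assert (0 < / exp x) by (apply Rinv_0_lt_compat; lra).
    field. repeat split; lra.
Qed.

Lemma d_f1 x : is_derive f1 x (hh x).
Proof.
  unfold f1, hh. pose proof (exp_pos x). auto_derive.
  - lra.
  - field. lra.
Qed.

Lemma exp_le x y : x <= y -> exp x <= exp y.
Proof. intros [H|H]; [left; apply exp_increasing; auto|subst; lra]. Qed.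

Lemma nonneg_frac N D : 0 <= N -> 0 < D -> 0 <= N / D.
Proof. intros; unfold Rdiv; apply Rmult_le_pos; [lra|left; apply Rinv_0_lt_compat; lra]. Qed.

Lemma hh_pos x : 0 < hh x.
Proof. unfold hh. pose proof (exp_pos x). apply Rdiv_lt_0_compat; nra. Qed.

Lemma hh_mono x b : Rabs x <= Rabs b -> hh b <= hh x.
Proof.
  intros H.
  pose proof (exp_pos x) as Ex; pose proof (exp_pos b) as Eb.
  assert (K : (exp x - exp b) * (1 - exp x * exp b) >= 0).
  { rewrite <- exp_plus.
    destruct (Rle_dec 0 b).
    - rewrite (Rabs_right b) in H by lra.
      assert (x <= b) by (apply Rabs_le_between in H; lra).
      assert (-b <= x) by (apply Rabs_le_between in H; lra).
      assert (exp x <= exp b) by (apply exp_le; lra).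
      assert (1 <= exp (x + b)) by (rewrite <- exp_0; apply exp_le; lra).
      nra.
    - rewrite (Rabs_left b) in H by lra.
      assert (-b >= x) by (apply Rabs_le_between in H; lra).
      assert (b <= x) by (apply Rabs_le_between in H; lra).
      assert (exp b <= exp x) by (apply exp_le; lra).
      assert (exp (x + b) <= 1) by (rewrite <- exp_0; apply exp_le; lra).
      nra. }
  assert (E : hh x - hh b = ((exp x - exp b) * (1 - exp x * exp b)) / ((1 + exp x)^2 * (1 + exp b)^2)).
  { unfold hh. field. split; lra. }
  assert (0 <= hh x - hh b). { rewrite E. apply nonneg_frac; [lra|]. 
    apply Rmult_lt_0_compat; apply pow_lt; lra. }
  lra.
Qed.

Lemma sc_r x b : b <= x -> hh b * exp (-(x-b)) <= hh x.
Proof.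
  intros H.
  pose proof (exp_pos x) as Ex; pose proof (exp_pos b) as Eb.
  assert (exp b <= exp x) by (apply exp_le; lra).
  replace (exp (-(x-b))) with (exp b / exp x)
    by (unfold Rminus; rewrite Ropp_plus_distr, Ropp_involutive, exp_plus, exp_Ropp; field; lra).
  assert (E : hh x - hh b * (exp b / exp x) = ((exp x - exp b) * (exp x + exp b + 2 * exp x * exp b)) / (exp x * (1 + exp x)^2 * (1 + exp b)^2)).
  { unfold hh. field. split; lra. }
  assert (0 <= hh x - hh b * (exp b / exp x)). { rewrite E. apply nonneg_frac; [apply Rmult_le_pos; [lra|]; assert (0 < exp x * exp b) by (apply Rmult_lt_0_compat; lra); lra|].
    apply Rmult_lt_0_compat; [apply Rmult_lt_0_compat; [lra|]|]; apply pow_lt; lra. }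
  lra.
Qed.

Lemma sc_l x b : x <= b -> hh b * exp (x-b) <= hh x.
Proof.
  intros H.
  pose proof (exp_pos x) as Ex; pose proof (exp_pos b) as Eb.
  assert (exp x <= exp b) by (apply exp_le; lra).
  replace (exp (x-b)) with (exp x / exp b)
    by (unfold Rminus; rewrite exp_plus, exp_Ropp; field; lra).
  assert (E : hh x - hh b * (exp x / exp b) = (exp x * (exp b - exp x) * (2 + exp x + exp b)) / ((1 + exp x)^2 * (1 + exp b)^2)).
  { unfold hh. field. split; lra. }
  assert (0 <= hh x - hh b * (exp x / exp b)). { rewrite E. apply nonneg_frac.
    - apply Rmult_le_pos; [apply Rmult_le_pos|]; lra.
    - apply Rmult_lt_0_compat; apply pow_lt; lra. }
  lra.
Qed.

Lemma pade r : 0 <= r -> 2 - r <= exp (-r) * (2 + r).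
Proof.
  intros Hr.
  assert (0 <= exp (-r) * (2 + r) - (2 - r)); [|lra].
  apply (conv0 (fun r => exp (-r) * (2 + r) - (2 - r)) (fun r => 1 - exp (-r) * (1 + r)) (fun r => r * exp (-r)) r 0).
  - intros x. auto_derive; [exact I|unfold Rminus; ring].
  - intros x. auto_derive; [exact I|unfold Rminus; ring].
  - rewrite Ropp_0, exp_0. ring.
  - rewrite Ropp_0, exp_0. ring.
  - intros x Hx. unfold Rmin, Rmax in Hx. destruct (Rle_dec r 0) as [|];
    pose proof (exp_pos (-x)); apply Rmult_le_pos; lra.
Qed.

Lemma polyb C r : 0 < C -> 0 <= r <= 2 * C ->
  r ^ 2 / (2 * (1 + C)) <= exp (-r) + r - 1.
Proof.
  intros HC Hr. pose proof (pade r (proj1 Hr)) as P.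
  pose proof (exp_pos (-r)).
  assert (A : r ^ 2 <= (exp (-r) + r - 1) * (2 + r)) by nra.
  assert (B : 0 <= exp (-r) + r - 1).
  { pose proof (exp_ineq1_le (-r)); lra. }
  assert (r ^ 2 <= (exp (-r) + r - 1) * (2 * (1 + C))) by nra.
  apply Rmult_le_reg_r with (2 * (1 + C)); [lra|].
  unfold Rdiv. rewrite Rmult_assoc, Rinv_l by lra. lra.
Qed.

Lemma dF (p : R -> R) (l : R) x : is_derive p x (l - f1 x) -> is_derive (fun x => floss x + p x) x l.
Proof.
  intros H. replace l with (f1 x + (l - f1 x)) by ring.
  apply is_derive_Reals. apply (derivable_pt_lim_plus floss p); apply is_derive_Reals; [apply d_floss|exact H].
Qed.

Lemma dG (p : R -> R) (l : R) x : is_derive p x (l - hh x) -> is_derive (fun x => f1 x + p x) x l.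
Proof.
  intros H. replace l with (hh x + (l - hh x)) by ring.
  apply is_derive_Reals. apply (derivable_pt_lim_plus f1 p); apply is_derive_Reals; [apply d_f1|exact H].
Qed.

Theorem lemma3 (C : R) (HC : 0 < C) (a b : R) (Ha : -C <= a <= C) :
  floss a >= floss b + Derive floss b * (a - b)
         + exp b / (2 * (1 + C)) * (Derive floss b) ^ 2 * (a - b) ^ 2.
Proof.
  rewrite (is_derive_unique _ _ _ (d_floss b)).
  replace (exp b / (2 * (1 + C)) * f1 b ^ 2) with (hh b / (2 * (1 + C))).
  2:{ unfold hh, f1. pose proof (exp_pos b). field. split; lra. }
  pose proof (hh_pos b) as Hb.
  destruct (Rle_dec (Rabs a) (Rabs b)) as [Hab|Hab].
  - assert (0 <= floss a - floss b - f1 b * (a - b) - hh b / (2 * (1 + C)) * (a - b) ^ 2); [|lra].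
    apply (conv0 (fun x => floss x - floss b - f1 b * (x - b) - hh b / (2 * (1 + C)) * (x - b) ^ 2) (fun x => f1 x - f1 b - hh b / (1 + C) * (x - b)) (fun x => hh x - hh b / (1 + C)) a b).
    + intros x.
      apply (is_derive_ext (fun x => floss x + (- floss b - f1 b * (x - b) - hh b / (2 * (1 + C)) * (x - b) ^ 2))); [intros; simpl; ring|].
      apply dF. auto_derive; [exact I|field; lra].
    + intros x.
      apply (is_derive_ext (fun x => f1 x + (- f1 b - hh b / (1 + C) * (x - b)))); [intros; simpl; ring|].
      apply dG. auto_derive; [exact I|field; lra].
    + ring.
    + ring.
    + intros x Hx.
      assert (Rabs x <= Rabs b).
      { unfold Rabs, Rmin, Rmax in *. repeat destruct Rcase_abs; repeat destruct Rle_dec; lra. }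
      pose proof (hh_mono x b H).
      assert (hh b / (1 + C) <= hh b).
      { unfold Rdiv. rewrite <- (Rmult_1_r (hh b)) at 2. apply Rmult_le_compat_l; [lra|].
        rewrite <- Rinv_1. apply Rinv_le_contravar; lra. }
      lra.
  - assert (Hb2 : -C <= b <= C).
    { unfold Rabs in *. repeat destruct Rcase_abs; lra. }
    destruct (Rtotal_order b a) as [Hlt|[Heq|Hgt]].
    + assert (0 <= floss a - floss b - f1 b * (a - b) - hh b * (exp (-(a - b)) + (a - b) - 1)); [|].
      { apply (conv0 (fun x => floss x - floss b - f1 b * (x - b) - hh b * (exp (-(x - b)) + (x - b) - 1))
           (fun x => f1 x - f1 b - hh b * (1 - exp (-(x - b)))) (fun x => hh x - hh b * exp (-(x - b))) a b).
        - intros x.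
          apply (is_derive_ext (fun x => floss x + (- floss b - f1 b * (x - b) - hh b * (exp (-(x - b)) + (x - b) - 1)))); [intros; simpl; ring|].
          apply dF. auto_derive; [exact I|unfold Rminus; ring].
        - intros x.
          apply (is_derive_ext (fun x => f1 x + (- f1 b - hh b * (1 - exp (-(x - b)))))); [intros; simpl; ring|].
          apply dG. auto_derive; [exact I|unfold Rminus; ring].
        - replace (b - b) with 0 by ring. rewrite Ropp_0, exp_0. ring.
        - replace (b - b) with 0 by ring. rewrite Ropp_0, exp_0. ring.
        - intros x Hx. assert (b <= x).
          { unfold Rmin in Hx. destruct Rle_dec; lra. }
          pose proof (sc_r x b H). lra. }
      pose proof (polyb C (a - b) HC ltac:(lra)).
      assert (hh b / (2 * (1 + C)) * (a - b) ^ 2 <= hh b * (exp (- (a - b)) + (a - b) - 1)).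
      { replace (hh b / (2 * (1 + C)) * (a - b) ^ 2) with (hh b * ((a - b) ^ 2 / (2 * (1 + C)))) by (field; lra).
        apply Rmult_le_compat_l; lra. }
      lra.
    + subst. lra.
    + assert (0 <= floss a - floss b - f1 b * (a - b) - hh b * (exp (a - b) - (a - b) - 1)); [|].
      { apply (conv0 (fun x => floss x - floss b - f1 b * (x - b) - hh b * (exp (x - b) - (x - b) - 1))
           (fun x => f1 x - f1 b - hh b * (exp (x - b) - 1)) (fun x => hh x - hh b * exp (x - b)) a b).
        - intros x.
          apply (is_derive_ext (fun x => floss x + (- floss b - f1 b * (x - b) - hh b * (exp (x - b) - (x - b) - 1)))); [intros; simpl; ring|].
          apply dF. auto_derive; [exact I|unfold Rminus; ring].
        - intros x.
          apply (is_derive_ext (fun x => f1 x + (- f1 b - hh b * (exp (x - b) - 1)))); [intros; simpl; ring|].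
          apply dG. auto_derive; [exact I|unfold Rminus; ring].
        - replace (b - b) with 0 by ring. rewrite exp_0. ring.
        - replace (b - b) with 0 by ring. rewrite exp_0. ring.
        - intros x Hx. assert (x <= b).
          { unfold Rmax in Hx. destruct Rle_dec; lra. }
          pose proof (sc_l x b H). lra. }
      pose proof (polyb C (b - a) HC ltac:(lra)).
      replace (- (b - a)) with (a - b) in H0 by ring.
      assert (hh b / (2 * (1 + C)) * (a - b) ^ 2 <= hh b * (exp (a - b) - (a - b) - 1)).
      { replace (hh b / (2 * (1 + C)) * (a - b) ^ 2) with (hh b * ((b - a) ^ 2 / (2 * (1 + C)))) by (field; lra).
        apply Rmult_le_compat_l; lra. }
      lra.
Qed.
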